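(* Let $A$ be a quasi-quantale. Then the set $NI(A)$ of idiomatic nuclei on $A$, ordered pointwise ($f\leq g$ iff $f(a)\leq g(a)$ for all $a\in A$), is a frame.
   Context: A quasi-quantale is a complete lattice $A$ equipped with an associative binary operation $(a,b)\mapsto ab$ such that for every directed subset $X\subseteq A$ (non-empty, and any two elements of $X$ have an upper bound in $X$) and every $a\in A$: $(\bigvee X)a=\bigvee\{xa\mid x\in X\}$ and $a(\bigvee X)=\bigvee\{ax\mid x\in X\}$. An inflator on $A$ is a monotone map $p\colon A\to A$ with $a\leq p(a)$ for all $a$. An idiomatic pre-nucleus is an inflator $p$ such that $p(a)p(b)\leq p(ab)=p(a\wedge b)=p(a)\wedge p(b)$ for all $a,b\in A$; an idiomatic nucleus is an idiomatic pre-nucleus $p$ with $p\circ p=p$. A frame is a complete lattice satisfying $a\wedge\bigvee X=\bigvee\{a\wedge x\mid x\in X\}$ for all $a$ and all subsets $X$. *)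

(* Defs.v *)
From Stdlib Require Import Classical FunctionalExtensionality PropExtensionality.

Set Implicit Arguments.

Definition is_partial_order (T : Type) (le : T -> T -> Prop) : Prop :=
  (forall x, le x x) /\
  (forall x y z, le x y -> le y z -> le x z) /\
  (forall x y, le x y -> le y x -> x = y).

Definition is_ub (T : Type) (le : T -> T -> Prop) (X : T -> Prop) (s : T) : Prop :=
  forall x, X x -> le x s.

Definition is_lub (T : Type) (le : T -> T -> Prop) (X : T -> Prop) (s : T) : Prop :=
  is_ub le X s /\ forall u, is_ub le X u -> le s u.

Definition is_glb2 (T : Type) (le : T -> T -> Prop) (a b m : T) : Prop :=
  le m a /\ le m b /\ forall u, le u a -> le u b -> le u m.

Definition is_frame (T : Type) (le : T -> T -> Prop) : Prop :=
  is_partial_order le /\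
  (forall X : T -> Prop, exists s, is_lub le X s) /\
  (forall (a : T) (X : T -> Prop) (s m : T),
      is_lub le X s -> is_glb2 le a s m ->
      is_lub le (fun y => exists x, X x /\ is_glb2 le a x y) m).

Record CompleteLattice := {
  cl_car :> Type;
  cl_le : cl_car -> cl_car -> Prop;
  cl_sup : (cl_car -> Prop) -> cl_car;
  cl_po : is_partial_order cl_le;
  cl_sup_lub : forall X, is_lub cl_le X (cl_sup X)
}.

Definition cl_meet (L : CompleteLattice) (a b : L) : L :=
  cl_sup L (fun x => cl_le L x a /\ cl_le L x b).

Definition directed (L : CompleteLattice) (X : L -> Prop) : Prop :=
  (exists x, X x) /\
  (forall x y, X x -> X y -> exists z, X z /\ cl_le L x z /\ cl_le L y z).

Record QuasiQuantale := {
  qq_lat :> CompleteLattice;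
  qq_mul : qq_lat -> qq_lat -> qq_lat;
  qq_mulA : forall a b c, qq_mul a (qq_mul b c) = qq_mul (qq_mul a b) c;
  qq_mul_supl : forall (X : qq_lat -> Prop) (a : qq_lat), @directed qq_lat X ->
      qq_mul (cl_sup qq_lat X) a = cl_sup qq_lat (fun y => exists x, X x /\ y = qq_mul x a);
  qq_mul_supr : forall (X : qq_lat -> Prop) (a : qq_lat), @directed qq_lat X ->
      qq_mul a (cl_sup qq_lat X) = cl_sup qq_lat (fun y => exists x, X x /\ y = qq_mul a x)
}.

Section Nuclei.
Variable A : QuasiQuantale.

Local Notation le := (cl_le A).
Local Notation mul := (qq_mul A).
Local Notation meet := (cl_meet A).

Definition inflator (p : A -> A) : Prop :=
  (forall a b, le a b -> le (p a) (p b)) /\ (forall a, le a (p a)).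

Definition idiomatic_prenucleus (p : A -> A) : Prop :=
  inflator p /\
  (forall a b, le (mul (p a) (p b)) (p (mul a b))) /\
  (forall a b, p (mul a b) = p (meet a b)) /\
  (forall a b, p (meet a b) = meet (p a) (p b)).

Definition idiomatic_nucleus (p : A -> A) : Prop :=
  idiomatic_prenucleus p /\ (forall a, p (p a) = p a).

Definition NI : Type := { p : A -> A | idiomatic_nucleus p }.

Definition NI_le (f g : NI) : Prop := forall a, le (proj1_sig f a) (proj1_sig g a).

End Nuclei.

(* Main.v *)
Require Import Defs.
From Stdlib Require Import Classical FunctionalExtensionality PropExtensionality ProofIrrelevance.

Lemma le_refl {A : QuasiQuantale} (x : A) : cl_le A x x.
Proof. destruct (cl_po A) as [H _]; apply H. Qed.
Lemma le_trans {A : QuasiQuantale} (x y z : A) : cl_le A x y -> cl_le A y z -> cl_le A x z.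
Proof. destruct (cl_po A) as [_ [H _]]; apply H. Qed.
Lemma le_anti {A : QuasiQuantale} (x y : A) : cl_le A x y -> cl_le A y x -> x = y.
Proof. destruct (cl_po A) as [_ [_ H]]; apply H. Qed.
Lemma sup_ub {A : QuasiQuantale} (X : A -> Prop) x : X x -> cl_le A x (cl_sup A X).
Proof. intro H; exact (proj1 (cl_sup_lub A X) x H). Qed.
Lemma sup_least {A : QuasiQuantale} (X : A -> Prop) u :
  (forall x, X x -> cl_le A x u) -> cl_le A (cl_sup A X) u.
Proof. intro H; exact (proj2 (cl_sup_lub A X) u H). Qed.

Lemma meet_l {A : QuasiQuantale} (a b : A) : cl_le A (cl_meet A a b) a.
Proof. unfold cl_meet. apply sup_least. intros x [H _]; exact H. Qed.
Lemma meet_r {A : QuasiQuantale} (a b : A) : cl_le A (cl_meet A a b) b.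
Proof. unfold cl_meet. apply sup_least. intros x [_ H]; exact H. Qed.
Lemma meet_glb {A : QuasiQuantale} (a b c : A) :
  cl_le A c a -> cl_le A c b -> cl_le A c (cl_meet A a b).
Proof. intros; unfold cl_meet; apply sup_ub; split; auto. Qed.
Lemma meet_mono {A : QuasiQuantale} (a b c d : A) :
  cl_le A a c -> cl_le A b d -> cl_le A (cl_meet A a b) (cl_meet A c d).
Proof.
  intros; apply meet_glb; [eapply le_trans; [apply meet_l|]|eapply le_trans; [apply meet_r|]]; auto.
Qed.
Lemma meet_comm {A : QuasiQuantale} (a b : A) : cl_le A (cl_meet A a b) (cl_meet A b a).
Proof. apply meet_glb; [apply meet_r|apply meet_l]. Qed.

Lemma mul_monol {A : QuasiQuantale} (x y a : A) :
  cl_le A x y -> cl_le A (qq_mul A x a) (qq_mul A y a).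
Proof.
  intro H.
  pose (X := fun z : A => z = x \/ z = y).
  assert (Hd : directed _ X).
  { split. exists x; left; reflexivity.
    intros u v Hu Hv; exists y; split; [right; reflexivity|].
    destruct Hu as [-> | ->], Hv as [-> | ->]; split; auto using le_refl. }
  assert (Hs : cl_sup A X = y).
  { apply le_anti. apply sup_least; intros z [-> | ->]; auto using le_refl.
    apply sup_ub; right; reflexivity. }
  rewrite <- Hs. rewrite (qq_mul_supl A a Hd). apply sup_ub.
  exists x; split; [left|]; reflexivity.
Qed.

Lemma mul_monor {A : QuasiQuantale} (x y a : A) :
  cl_le A x y -> cl_le A (qq_mul A a x) (qq_mul A a y).
Proof.
  intro H.
  pose (X := fun z : A => z = x \/ z = y).
  assert (Hd : directed _ X).
  { split. exists x; left; reflexivity.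
    intros u v Hu Hv; exists y; split; [right; reflexivity|].
    destruct Hu as [-> | ->], Hv as [-> | ->]; split; auto using le_refl. }
  assert (Hs : cl_sup A X = y).
  { apply le_anti. apply sup_least; intros z [-> | ->]; auto using le_refl.
    apply sup_ub; right; reflexivity. }
  rewrite <- Hs. rewrite (qq_mul_supr A a Hd). apply sup_ub.
  exists x; split; [left|]; reflexivity.
Qed.

Lemma mul_mono {A : QuasiQuantale} (x y u v : A) :
  cl_le A x y -> cl_le A u v -> cl_le A (qq_mul A x u) (qq_mul A y v).
Proof. intros; eapply le_trans; [apply mul_monol; eauto|apply mul_monor; auto]. Qed.

Lemma n_mono {A : QuasiQuantale} p : idiomatic_nucleus A p ->
  forall a b, cl_le A a b -> cl_le A (p a) (p b).
Proof. intros [[[H _] _] _]; exact H. Qed.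
Lemma n_infl {A : QuasiQuantale} p : idiomatic_nucleus A p -> forall a, cl_le A a (p a).
Proof. intros [[[_ H] _] _]; exact H. Qed.
Lemma n_mul {A : QuasiQuantale} p : idiomatic_nucleus A p ->
  forall a b, cl_le A (qq_mul A (p a) (p b)) (p (qq_mul A a b)).
Proof. intros [[_ [H _]] _]; exact H. Qed.
Lemma n_mulmeet {A : QuasiQuantale} p : idiomatic_nucleus A p ->
  forall a b, p (qq_mul A a b) = p (cl_meet A a b).
Proof. intros [[_ [_ [H _]]] _]; exact H. Qed.
Lemma n_meet {A : QuasiQuantale} p : idiomatic_nucleus A p ->
  forall a b, p (cl_meet A a b) = cl_meet A (p a) (p b).
Proof. intros [[_ [_ [_ H]]] _]; exact H. Qed.
Lemma n_idem {A : QuasiQuantale} p : idiomatic_nucleus A p -> forall a, p (p a) = p a.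
Proof. intros [_ H]; exact H. Qed.

Lemma fix_mul_meet {A : QuasiQuantale} p s : idiomatic_nucleus A p -> cl_le A (p s) s ->
  forall u v, cl_le A (qq_mul A u v) s <-> cl_le A (cl_meet A u v) s.
Proof.
  intros Hp Hs u v; split; intro H.
  - eapply le_trans; [apply (n_infl p Hp)|]. rewrite <- (n_mulmeet p Hp).
    eapply le_trans; [apply (n_mono p Hp); exact H|exact Hs].
  - eapply le_trans; [apply (n_infl p Hp)|]. rewrite (n_mulmeet p Hp).
    eapply le_trans; [apply (n_mono p Hp); exact H|exact Hs].
Qed.

(* Pataraia-style fixed point lemma *)
Lemma pataraia {A : QuasiQuantale} (F : (A -> A) -> Prop) (Q : A -> Prop) :
  (forall p, F p -> (forall x y, cl_le A x y -> cl_le A (p x) (p y)) /\ (forall x, cl_le A x (p x))) ->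
  (forall p u, F p -> Q u -> Q (p u)) ->
  (forall D : A -> Prop, directed _ D -> (forall d, D d -> Q d) -> Q (cl_sup A D)) ->
  forall a, Q a -> exists T, Q T /\ cl_le A a T /\ forall p, F p -> cl_le A (p T) T.
Proof.
  intros HF HQ HD a Qa.
  pose (M := fun g : A -> A => (forall u, Q u -> Q (g u)) /\
      (forall u v, Q u -> Q v -> cl_le A u v -> cl_le A (g u) (g v)) /\
      (forall u, Q u -> cl_le A u (g u))).
  assert (Mcomp : forall g h, M g -> M h -> M (fun x => g (h x))).
  { intros g h [g1 [g2 g3]] [h1 [h2 h3]]; split; [|split].
    - intros; auto.
    - intros; apply g2; auto.
    - intros u Qu. eapply le_trans; [apply h3; auto|apply g3; auto]. }
  assert (Mid : M (fun x => x)).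
  { split; [|split]; intros; auto using le_refl. }
  pose (D := fun u w => exists g, M g /\ w = g u).
  assert (DQ : forall u, Q u -> forall w, D u w -> Q w).
  { intros u Qu w [g [[g1 _] ->]]; auto. }
  assert (Ddir : forall u, Q u -> directed _ (D u)).
  { intros u Qu; split.
    - exists u; exists (fun x => x); split; auto.
    - intros w1 w2 [g [Mg ->]] [h [Mh ->]].
      exists (g (h u)); split; [exists (fun x => g (h x)); split; auto|].
      destruct Mg as [g1 [g2 g3]], Mh as [h1 [h2 h3]]. split.
      + apply g2; auto.
      + apply g3; auto. }
  pose (Tf := fun u => cl_sup A (D u)).
  assert (QT : forall u, Q u -> Q (Tf u)).
  { intros u Qu; apply HD; [apply Ddir; exact Qu|intros d Hd; exact (DQ u Qu d Hd)]. }
  assert (MT : M Tf).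
  { split; [|split].
    - exact QT.
    - intros u v Qu Qv Huv. apply sup_least. intros w [g [Mg ->]].
      eapply le_trans; [|apply sup_ub; exists g; split; [exact Mg|reflexivity]].
      destruct Mg as [_ [g2 _]]; auto.
    - intros u Qu. apply sup_ub. exists (fun x => x); split; auto. }
  exists (Tf a); split; [auto|split].
  - apply sup_ub. exists (fun x => x); split; auto.
  - intros p Fp. apply sup_ub. exists (fun x => p (Tf x)); split; [|reflexivity].
    destruct (HF p Fp) as [p1 p2].
    split; [|split].
    + intros; apply HQ; auto.
    + intros u v Qu Qv Huv; apply p1. destruct MT as [_ [m2 _]]; auto.
    + intros u Qu. eapply le_trans; [|apply p2]. destruct MT as [_ [_ m3]]; auto.
Qed.

Definition inf {A : QuasiQuantale} (P : A -> Prop) : A :=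
  cl_sup A (fun l => forall s, P s -> cl_le A l s).
Lemma inf_lb {A : QuasiQuantale} (P : A -> Prop) s : P s -> cl_le A (inf P) s.
Proof. intro Hs; apply sup_least; intros l Hl; auto. Qed.
Lemma inf_glb {A : QuasiQuantale} (P : A -> Prop) l :
  (forall s, P s -> cl_le A l s) -> cl_le A l (inf P).
Proof. intro H; apply sup_ub; exact H. Qed.

Definition Bf (A : QuasiQuantale) (a : A) : A :=
  inf (fun w => exists g : NI A, w = proj1_sig g a).

Lemma Bf_le {A : QuasiQuantale} (g : NI A) a : cl_le A (Bf A a) (proj1_sig g a).
Proof. apply inf_lb; exists g; reflexivity. Qed.

Lemma Bf_nuc (A : QuasiQuantale) : idiomatic_nucleus A (Bf A).
Proof.
  assert (Hmono : forall a b, cl_le A a b -> cl_le A (Bf A a) (Bf A b)).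
  { intros a b Hab. apply inf_glb; intros s [g ->].
    eapply le_trans; [apply Bf_le|]. apply (n_mono _ (proj2_sig g)); auto. }
  assert (Hinfl : forall a, cl_le A a (Bf A a)).
  { intros a; apply inf_glb; intros s [g ->]. apply (n_infl _ (proj2_sig g)). }
  split; [split; [split; auto|split; [|split]]|].
  - intros a b. apply inf_glb; intros s [g ->].
    eapply le_trans; [|apply (n_mul _ (proj2_sig g))].
    apply mul_mono; apply Bf_le.
  - intros a b. unfold Bf. f_equal. apply functional_extensionality; intro w.
    apply propositional_extensionality; split; intros [g ->]; exists g;
      rewrite (n_mulmeet _ (proj2_sig g)); reflexivity.
  - intros a b. apply le_anti.
    + apply meet_glb; apply Hmono; [apply meet_l|apply meet_r].
    + apply inf_glb; intros s [g ->]. rewrite (n_meet _ (proj2_sig g)).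
      apply meet_mono; apply Bf_le.
  - intros a. apply le_anti; [|apply Hinfl].
    apply inf_glb; intros s [g ->].
    eapply le_trans; [apply (Bf_le g)|]. rewrite <- (n_idem _ (proj2_sig g) a).
    apply (n_mono _ (proj2_sig g)). apply (Bf_le g).
Qed.

Definition BN (A : QuasiQuantale) : NI A := exist _ (Bf A) (Bf_nuc A).

Definition Fam {A : QuasiQuantale} (X : NI A -> Prop) (p : A -> A) : Prop :=
  (exists x, X x /\ p = proj1_sig x) \/ p = Bf A.

Lemma Fam_nuc {A : QuasiQuantale} (X : NI A -> Prop) p : Fam X p -> idiomatic_nucleus A p.
Proof. intros [[x [_ ->]]| ->]; [exact (proj2_sig x)|apply Bf_nuc]. Qed.

Definition SS {A : QuasiQuantale} (X : NI A -> Prop) (s : A) : Prop :=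
  forall p, Fam X p -> cl_le A (p s) s.

Definition jj {A : QuasiQuantale} (X : NI A -> Prop) (a : A) : A :=
  inf (fun s => SS X s /\ cl_le A a s).

Lemma jj_least {A : QuasiQuantale} (X : NI A -> Prop) a s :
  SS X s -> cl_le A a s -> cl_le A (jj X a) s.
Proof. intros; apply inf_lb; split; auto. Qed.
Lemma jj_infl {A : QuasiQuantale} (X : NI A -> Prop) a : cl_le A a (jj X a).
Proof. apply inf_glb; intros s [_ H]; exact H. Qed.
Lemma jj_S {A : QuasiQuantale} (X : NI A -> Prop) a : SS X (jj X a).
Proof.
  intros p Fp. apply inf_glb; intros s [Ss Has].
  eapply le_trans; [apply (n_mono _ (Fam_nuc X p Fp)); apply jj_least; eauto|].
  apply Ss; auto.
Qed.
Lemma jj_mono {A : QuasiQuantale} (X : NI A -> Prop) a b :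
  cl_le A a b -> cl_le A (jj X a) (jj X b).
Proof. intro H; apply jj_least; [apply jj_S|]. eapply le_trans; [exact H|apply jj_infl]. Qed.

Lemma jj_ind {A : QuasiQuantale} (X : NI A -> Prop) (Q : A -> Prop) :
  (forall p u, Fam X p -> Q u -> Q (p u)) ->
  (forall D : A -> Prop, directed _ D -> (forall d, D d -> Q d) -> Q (cl_sup A D)) ->
  forall a, Q a -> exists T, Q T /\ cl_le A (jj X a) T.
Proof.
  intros H1 H2 a Qa.
  destruct (pataraia (Fam X) Q) with (a := a) as [T [QT [aT FT]]]; auto.
  - intros p Fp; split; [apply (n_mono _ (Fam_nuc X p Fp))|apply (n_infl _ (Fam_nuc X p Fp))].
  - exists T; split; auto. apply jj_least; auto.
Qed.

Lemma SS_mulmeet {A : QuasiQuantale} (X : NI A -> Prop) s : SS X s ->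
  forall u v, cl_le A (qq_mul A u v) s <-> cl_le A (cl_meet A u v) s.
Proof. intro Hs. apply (fix_mul_meet (Bf A)); [apply Bf_nuc|apply Hs; right; reflexivity]. Qed.

Lemma jj_meet_step {A : QuasiQuantale} (X : NI A -> Prop) a c s :
  SS X s -> cl_le A (cl_meet A a c) s -> cl_le A (cl_meet A (jj X a) c) s.
Proof.
  intros Ss H.
  destruct (jj_ind X (fun u => cl_le A (cl_meet A u c) s)) with (a := a) as [T [QT HT]]; auto.
  - intros p u Fp Qu. pose proof (Fam_nuc X p Fp) as Hp.
    eapply le_trans; [apply meet_mono; [apply le_refl|apply (n_infl _ Hp)]|].
    rewrite <- (n_meet _ Hp). eapply le_trans; [apply (n_mono _ Hp); exact Qu|]. apply Ss; auto.
  - intros D Dd HD. apply (SS_mulmeet X s Ss). rewrite (qq_mul_supl A c Dd).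
    apply sup_least. intros y [d [Dd' ->]]. apply (SS_mulmeet X s Ss). auto.
  - eapply le_trans; [|exact QT]. apply meet_mono; [exact HT|apply le_refl].
Qed.

Lemma jj_nuc {A : QuasiQuantale} (X : NI A -> Prop) : idiomatic_nucleus A (jj X).
Proof.
  assert (Hmm : forall a b, jj X (qq_mul A a b) = jj X (cl_meet A a b)).
  { intros a b; apply le_anti; apply jj_least; try apply jj_S.
    - apply (SS_mulmeet X _ (jj_S X _)). apply jj_infl.
    - apply (SS_mulmeet X _ (jj_S X _)). apply jj_infl. }
  assert (Hme : forall a b, jj X (cl_meet A a b) = cl_meet A (jj X a) (jj X b)).
  { intros a b; apply le_anti.
    - apply meet_glb; apply jj_mono; [apply meet_l|apply meet_r].
    - apply jj_meet_step; [apply jj_S|].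
      eapply le_trans; [apply meet_comm|].
      apply jj_meet_step; [apply jj_S|].
      eapply le_trans; [apply meet_comm|]. apply jj_infl. }
  split; [split; [split; [apply jj_mono|apply jj_infl]|split; [|split]]|].
  - intros a b. apply (SS_mulmeet X _ (jj_S X _)). rewrite Hmm, Hme. apply le_refl.
  - exact Hmm.
  - exact Hme.
  - intros a; apply le_anti; [apply jj_least; [apply jj_S|apply le_refl]|apply jj_infl].
Qed.

Definition JN {A : QuasiQuantale} (X : NI A -> Prop) : NI A := exist _ (jj X) (jj_nuc X).

Lemma JN_lub {A : QuasiQuantale} (X : NI A -> Prop) : is_lub (@NI_le A) X (JN X).
Proof.
  split.
  - intros x Xx a. simpl. eapply le_trans; [apply (n_mono _ (proj2_sig x)); apply jj_infl|].
    apply (jj_S X a). left; exists x; split; auto.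
  - intros u Hu a. simpl. apply jj_least; [|apply (n_infl _ (proj2_sig u))].
    intros p [[x [Xx ->]]| ->].
    + eapply le_trans; [apply Hu; exact Xx|]. rewrite (n_idem _ (proj2_sig u)); apply le_refl.
    + eapply le_trans; [apply (Bf_le u)|]. rewrite (n_idem _ (proj2_sig u)); apply le_refl.
Qed.

Definition mf {A : QuasiQuantale} (f g : NI A) (a : A) : A :=
  cl_meet A (proj1_sig f a) (proj1_sig g a).

Lemma mf_nuc {A : QuasiQuantale} (f g : NI A) : idiomatic_nucleus A (mf f g).
Proof.
  destruct f as [f Hf], g as [g Hg]; unfold mf; simpl.
  split; [split; [split|split; [|split]]|].
  - intros a b H; apply meet_mono; [apply (n_mono _ Hf)|apply (n_mono _ Hg)]; auto.
  - intros a; apply meet_glb; [apply (n_infl _ Hf)|apply (n_infl _ Hg)].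
  - intros a b; apply meet_glb.
    + eapply le_trans; [|apply (n_mul _ Hf)]. apply mul_mono; apply meet_l.
    + eapply le_trans; [|apply (n_mul _ Hg)]. apply mul_mono; apply meet_r.
  - intros a b; rewrite (n_mulmeet _ Hf), (n_mulmeet _ Hg); reflexivity.
  - intros a b; rewrite (n_meet _ Hf), (n_meet _ Hg). apply le_anti.
    + apply meet_glb; apply meet_mono; first [apply meet_l|apply meet_r].
    + apply meet_glb; apply meet_mono; first [apply meet_l|apply meet_r].
  - intros a; apply le_anti.
    + apply meet_mono.
      * rewrite <- (n_idem _ Hf a) at 2. apply (n_mono _ Hf); apply meet_l.
      * rewrite <- (n_idem _ Hg a) at 2. apply (n_mono _ Hg); apply meet_r.
    + apply meet_glb; [apply (n_infl _ Hf)|apply (n_infl _ Hg)].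
Qed.

Definition MN {A : QuasiQuantale} (f g : NI A) : NI A := exist _ (mf f g) (mf_nuc f g).

Lemma MN_glb {A : QuasiQuantale} (f g : NI A) : is_glb2 (@NI_le A) f g (MN f g).
Proof.
  split; [|split].
  - intros a; apply meet_l.
  - intros a; apply meet_r.
  - intros u H1 H2 a; apply meet_glb; auto.
Qed.

Lemma key_step {A : QuasiQuantale} (f : NI A) p (Hp : idiomatic_nucleus A p) a v :
  cl_le A a v ->
  cl_le A (cl_meet A (proj1_sig f a) (p v))
    (cl_meet A (proj1_sig f (cl_meet A (proj1_sig f a) v)) (p (cl_meet A (proj1_sig f a) v))).
Proof.
  destruct f as [f Hf]; simpl. intro Hav.
  apply meet_glb.
  - eapply le_trans; [apply meet_l|]. rewrite (n_meet _ Hf), (n_idem _ Hf).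
    apply meet_glb; [apply le_refl|apply (n_mono _ Hf); auto].
  - rewrite (n_meet _ Hp). apply meet_mono; [apply (n_infl _ Hp)|apply le_refl].
Qed.

Theorem proposition3p13 (A : QuasiQuantale) : is_frame (@NI_le A).
Proof.
  split; [|split].
  - split; [|split].
    + intros x a; apply le_refl.
    + intros x y z H1 H2 a; eapply le_trans; eauto.
    + intros [x Hx] [y Hy] H1 H2.
      assert (x = y).
      { apply functional_extensionality; intro a; apply le_anti; [apply H1|apply H2]. }
      subst y. f_equal. apply proof_irrelevance.
  - intros X; exists (JN X); apply JN_lub.
  - intros f X s m Hs [Hm1 [Hm2 Hm3]]. split.
    + intros y [x [Xx [Hy1 [Hy2 _]]]] a.
      apply Hm3; auto. intros b. eapply le_trans; [apply Hy2|]. apply (proj1 Hs x Xx).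
    + intros u Hu a.
      assert (Hfx : forall x, X x -> forall w, cl_le A (mf f x w) (proj1_sig u w)).
      { intros x Xx w. apply (Hu (MN f x)). exists x; split; auto. apply MN_glb. }
      pose proof (proj2_sig u) as Hu'.
      destruct (jj_ind X (fun v => cl_le A a v /\
           cl_le A (cl_meet A (proj1_sig f a) v) (proj1_sig u a))) with (a := a)
        as [T [[_ QT] HT]].
      * intros p v Fp [Hav Hv]. pose proof (Fam_nuc X p Fp) as Hp. split.
        { eapply le_trans; [exact Hav|apply (n_infl _ Hp)]. }
        eapply le_trans; [apply (key_step f p Hp a v Hav)|].
        set (w := cl_meet A (proj1_sig f a) v).
        eapply le_trans; [|rewrite <- (n_idem _ Hu' a); apply (n_mono _ Hu'); exact Hv].
        destruct Fp as [[x [Xx ->]]| ->].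
        { apply (Hfx x Xx). }
        { eapply le_trans; [apply meet_r|]. apply Bf_le. }
      * intros D Dd HD. split.
        { destruct Dd as [[d Dd] _]. eapply le_trans; [apply (proj1 (HD d Dd))|]. apply sup_ub; auto. }
        apply (fix_mul_meet _ _ Hu'); [rewrite (n_idem _ Hu'); apply le_refl|].
        rewrite (qq_mul_supr A _ Dd). apply sup_least. intros y [d [Dd' ->]].
        apply (fix_mul_meet _ _ Hu'); [rewrite (n_idem _ Hu'); apply le_refl|].
        apply (HD d Dd').
      * split; [apply le_refl|eapply le_trans; [apply meet_r|apply (n_infl _ Hu')]].
      * eapply le_trans; [|exact QT]. apply meet_glb.
        { apply Hm1. }
        { eapply le_trans; [apply Hm2|]. eapply le_trans; [|exact HT].
          apply (proj2 Hs (JN X) (proj1 (JN_lub X))). }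
Qed.
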